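(* Let $\mathcal{H}$ be a real Hilbert space, $A:\mathcal{H}\rightrightarrows\mathcal{H}$ maximal monotone with $A^{-1}(0)\neq\emptyset$, $\theta>0$, $p\geq1$ an integer, and suppose $(x,\lambda):[0,t_0]\to\mathcal{H}\times(0,+\infty)$ is a solution of \[ \dot{x}(t)+x(t)-(I+\lambda(t)A)^{-1}x(t)=0,\qquad \lambda(t)\,\|(I+\lambda(t)A)^{-1}x(t)-x(t)\|^{p-1}=\theta, \] with $x(0)\in\{x:0\notin Ax\}$, $x$ continuously differentiable and $\lambda$ locally Lipschitz. Then $\lambda(\cdot)$ is nondecreasing.
   Context: $(I+\lambda A)^{-1}$ is the resolvent of $A$ of index $\lambda>0$. *)

(* Defs.v *)
From HB Require Import structures.
From mathcomp Require Import all_boot all_order all_algebra.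
From mathcomp Require Import all_classical all_reals all_analysis.
Set Implicit Arguments. Unset Strict Implicit. Unset Printing Implicit Defensive.
Import Order.TTheory GRing.Theory Num.Theory.
Import numFieldNormedType.Exports.
Local Open Scope classical_set_scope.
Local Open Scope ring_scope.

Definition is_inner_product (R : realType) (H : normedModType R)
  (ip : H -> H -> R) : Prop :=
  [/\ (forall x y, ip x y = ip y x),
      (forall a x y z, ip (a *: x + y) z = a * ip x z + ip y z) &
      (forall x, ip x x = `|x| ^+ 2)].

(* set-valued operators H ⇉ H are relations: A x u means u ∈ A x *)
Definition monotone_op (R : realType) (H : normedModType R)
  (ip : H -> H -> R) (A : H -> set H) : Prop :=
  forall x y u v, A x u -> A y v -> 0 <= ip (u - v) (x - y).

Definition maximal_monotone (R : realType) (H : normedModType R)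
  (ip : H -> H -> R) (A : H -> set H) : Prop :=
  monotone_op ip A /\
  forall B : H -> set H, monotone_op ip B ->
    (forall x u, A x u -> B x u) -> forall x u, B x u -> A x u.

(* The resolvent (I + lam A)^{-1} x : the point y with x ∈ y + lam A y
   (unique and existing when A is maximal monotone and lam > 0). *)
Definition resolvent (R : realType) (H : normedModType R)
  (A : H -> set H) (lam : R) (x : H) : H :=
  xget 0 [set y | exists u, A y u /\ x = y + lam *: u].

Definition derivative_on (R : realType) (H : normedModType R)
  (a b : R) (x x' : R -> H) : Prop :=
  forall t, t \in `[a, b] ->
    (fun s => (s - t)^-1 *: (x s - x t))
      @ (within (fun s => s \in `[a, b]) t^') --> x' t.

Definition C1_on (R : realType) (H : normedModType R)
  (a b : R) (x x' : R -> H) : Prop :=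
  derivative_on a b x x' /\ {within [set s | s \in `[a, b]], continuous x'}.

Definition locally_lipschitz_on (R : realType) (a b : R) (f : R -> R) : Prop :=
  forall t, t \in `[a, b] -> exists2 d : R, 0 < d & exists L : R,
    forall s r, s \in `[a, b] -> r \in `[a, b] ->
      `|s - t| < d -> `|r - t| < d -> `|f s - f r| <= L * `|s - r|.

(* Main.v *)
Require Import Defs.
From HB Require Import structures.
From mathcomp Require Import all_boot all_order all_algebra.
From mathcomp Require Import all_classical all_reals all_analysis.
From mathcomp Require Import ring lra.
Import Order.TTheory GRing.Theory Num.Theory.
Import numFieldNormedType.Exports.
Local Open Scope classical_set_scope.
Local Open Scope ring_scope.
Set Implicit Arguments. Unset Strict Implicit. Unset Printing Implicit Defensive.
Section IP.
Variables (R : realType) (H : normedModType R) (ip : H -> H -> R).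
Hypothesis hip : is_inner_product ip.

Lemma ip_sym x y : ip x y = ip y x.
Proof. by case: hip. Qed.
Lemma ip_lin a x y z : ip (a *: x + y) z = a * ip x z + ip y z.
Proof. by case: hip. Qed.
Lemma ip_norm x : ip x x = `|x| ^+ 2.
Proof. by case: hip. Qed.
Lemma ip_0l z : ip 0 z = 0.
Proof.
have := ip_lin 1 0 0 z; rewrite scale1r !addr0 mul1r => h.
lra.
Qed.
Lemma ip_Dl x y z : ip (x + y) z = ip x z + ip y z.
Proof. by have := ip_lin 1 x y z; rewrite scale1r mul1r. Qed.
Lemma ip_Zl a x z : ip (a *: x) z = a * ip x z.
Proof. by rewrite -(addr0 (a *: x)) ip_lin ip_0l addr0. Qed.
Lemma ip_Nl x z : ip (- x) z = - ip x z.
Proof. by rewrite -scaleN1r ip_Zl mulN1r. Qed.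
Lemma ip_Bl x y z : ip (x - y) z = ip x z - ip y z.
Proof. by rewrite ip_Dl ip_Nl. Qed.
Lemma ip_Dr x y z : ip z (x + y) = ip z x + ip z y.
Proof. by rewrite ip_sym ip_Dl !(ip_sym z). Qed.
Lemma ip_Zr a x z : ip z (a *: x) = a * ip z x.
Proof. by rewrite ip_sym ip_Zl (ip_sym z). Qed.
Lemma ip_Br x y z : ip z (x - y) = ip z x - ip z y.
Proof. by rewrite ip_sym ip_Bl !(ip_sym z). Qed.

Lemma ip_Nr x z : ip z (- x) = - ip z x.
Proof. by rewrite ip_sym ip_Nl ip_sym. Qed.

Lemma ip_CS x y : ip x y <= `|x| * `|y|.
Proof.
have [->|y0] := eqVneq y 0.
  by rewrite ip_sym ip_0l normr0 mulr0.
have ny : 0 < `|y| by rewrite normr_gt0.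
set c := ip x y.
have := normr_ge0 ((`|y| ^+ 2) *: x - c *: y).
move=> _.
have h : 0 <= ip ((`|y| ^+ 2) *: x - c *: y) ((`|y| ^+ 2) *: x - c *: y).
  by rewrite ip_norm sqr_ge0.
rewrite !ip_Bl !ip_Br !ip_Zl !ip_Zr !ip_norm (ip_sym y x) -/c in h.
have h2 : c ^+ 2 <= (`|x| * `|y|) ^+ 2.
  have : 0 <= `|y| ^+ 2 * ((`|x| * `|y|) ^+ 2 - c ^+ 2) by nra.
  rewrite pmulr_rge0 ?exprn_gt0 // subr_ge0 //.
have nx := normr_ge0 x.
rewrite leNgt; apply/negP => lt.
have : (`|x| * `|y|) ^+ 2 < c ^+ 2.
  rewrite ltr_pXn2r // ?nnegrE ?mulr_ge0 //.
  apply: (le_trans _ (ltW lt)); exact: mulr_ge0.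
lra.
Qed.

Lemma ip_CS' x y : - (`|x| * `|y|) <= ip x y.
Proof. have := ip_CS (- x) y; rewrite ip_Nl normrN; lra. Qed.

Lemma ip_polar x y : `|x + y| ^+ 2 = `|x| ^+ 2 + 2 * ip x y + `|y| ^+ 2.
Proof. rewrite -!ip_norm ip_Dl !ip_Dr (ip_sym y x); ring. Qed.

End IP.
Lemma deriv_ext (R : realType) (H : normedModType R) (a b : R) (x x' : R -> H) t :
  derivative_on a b x x' -> t \in `[a, b] -> forall eta, 0 < eta ->
  exists2 d, 0 < d & forall s, s \in `[a, b] -> t < s -> s - t < d ->
    `|x s - x t - (s - t) *: x' t| <= eta * (s - t).
Proof.
move=> D tI eta eta0.
have := D t tI. move/cvgrPdist_lt => /(_ eta eta0).
rewrite /within /=. move/nbhs_ballP => [d d0 Hd].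
exists d => // s sI ts sd.
have st : s - t != 0 by rewrite subr_eq0 gt_eqF.
have := Hd s.
rewrite /ball /= => HH.
have /ltW Hle : `|x' t - (s - t)^-1 *: (x s - x t)| < eta.
 apply: HH => //; last by rewrite gt_eqF.
 rewrite ltr_distlC; apply/andP; split; last by rewrite -ltrBlDl.
 lra.
have -> : x s - x t - (s - t) *: x' t = (s - t) *: ((s - t)^-1 *: (x s - x t) - x' t).
  by rewrite scalerBr scalerA mulfV // scale1r.
rewrite normrZ gtr0_norm ?subr_gt0 // mulrC ler_pM2r ?subr_gt0 //.
by rewrite distrC.
Qed.

Lemma dini (R : realType) (f : R -> R) (a b : R) :
  a <= b ->
  (forall c, a <= c <= b -> exists2 d, 0 < d & exists L, forall q, a <= q <= b ->
      `|q - c| < d -> `|f q - f c| <= L * `|q - c|) ->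
  (forall r, a <= r < b -> forall e, 0 < e -> forall d, 0 < d ->
      exists h, [/\ 0 < h, h < d, r + h <= b & f r - e * h <= f (r + h)]) ->
  f a <= f b.
Proof.
move=> ab Hc Hd.
suff key : forall e, 0 < e -> f a - e * (b - a) <= f b.
  rewrite leNgt; apply/negP => fba.
  have e0 : 0 < (f a - f b) / (2 * (b - a + 1)).
    by apply: divr_gt0; lra.
  have := key _ e0.
  set e := (f a - f b) / (2 * (b - a + 1)).
  have -> : e * (b - a) = (f a - f b) * ((b - a) / (2 * (b - a + 1))).
    by rewrite /e mulrAC mulrA.
  have : (b - a) / (2 * (b - a + 1)) < 1.
    by rewrite ltr_pdivrMr; lra.
  move=> lt1 le; nra.
move=> e e0.
pose S := [set r | a <= r <= b /\ f a - e * (r - a) <= f r].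
have Sa : S a by split; [rewrite lexx ab | rewrite subrr mulr0 subr0].
have hS : has_sup S.
  split; first by exists a.
  by exists b => r [/andP[]].
set c := sup S.
have ac : a <= c by apply: sup_upper_bound.
have cb : c <= b.
  apply: sup_le_ub; first by exists a.
  by move=> r [/andP[]].
have Sc : S c.
  split; first by rewrite ac cb.
  have acb : a <= c <= b by rewrite ac cb.
  have [d d0 [L HL]] := Hc c acb.
  apply/ler_addgt0Pr => g g0.
  pose eps := Num.min d (g / (`|L| + 1)).
  have eps0 : 0 < eps by rewrite lt_min d0 divr_gt0 //; lra.
  have [q Sq qc] := sup_adherent eps0 hS.
  have qlec : q <= c by apply: sup_upper_bound.
  move: Sq => [/andP[aq qb] fq].
  have cqd : `|q - c| < d.
    rewrite distrC ger0_norm ?subr_ge0 //.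
    have : eps <= d by rewrite ge_min lexx.
    rewrite -/c in qc; lra.
  have aqb : a <= q <= b by rewrite aq qb.
  have hqc : `|q - c| = c - q by rewrite distrC ger0_norm ?subr_ge0.
  have := HL q aqb cqd.
  rewrite hqc => Hf.
  have h1 : `|f q - f c| <= `|L| * (c - q).
    apply: (le_trans Hf); rewrite ler_wpM2r ?subr_ge0 //; exact: ler_norm.
  have h2 : `|L| * (c - q) <= g.
    have : c - q < g / (`|L| + 1).
      have : eps <= g / (`|L| + 1) by rewrite ge_min lexx orbT.
      rewrite -/c in qc; lra.
    rewrite ltr_pdivlMr; last by have := normr_ge0 L; lra.
    have := normr_ge0 L; nra.
  have := ler_norm (f q - f c).
  have : e * (q - a) <= e * (c - a) by rewrite ler_wpM2l ?(ltW e0) //; lra.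
  lra.
have [cb' | cb'] := eqVneq c b.
  by move: Sc; rewrite cb' => -[].
have ltcb : c < b by rewrite lt_neqAle cb' cb.
have e20 : 0 < e / 2 by apply: divr_gt0.
have acb : a <= c < b by rewrite ac ltcb.
have bc0 : 0 < b - c by rewrite subr_gt0.
have [h [h0 hd chb Hf]] := Hd c acb _ e20 _ bc0.
have Sch : S (c + h).
  split; first by apply/andP; split; lra.
  move: Sc => [_ Hc'].
  have : e / 2 * h <= e * h by rewrite ler_wpM2r ?(ltW h0) //; lra.
  lra.
have := sup_upper_bound hS Sch.
rewrite -/c; lra.
Qed.

Lemma core (R : realType) (l l' a b dn c ce E h e eta : R) :
  0 < l -> 0 < l' -> 0 < a -> 0 < h -> h <= 1/3 -> 0 < e ->
  eta < l * a -> eta <= a * e / 2 -> l' < l - e * h -> l * a < l' * b ->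
  0 <= (l - l' - h * l) * c + ce - l' * dn ^+ 2 ->
  c <= dn * a -> - (dn * a) <= c -> ce <= dn * E -> E <= eta * h ->
  b - a <= dn -> b ^+ 2 = dn ^+ 2 + 2 * c + a ^+ 2 -> False.
Proof.
move=> l0 l'0 a0 h0 h3 e0 etal etae l'l lb M c1 c2 ce1 Eh ba pol.
have eh0 : 0 < e * h by apply: mulr_gt0.
have ab : a < b.
  have : l' * a < l' * b by apply: (lt_trans _ lb); rewrite ltr_pM2r //; lra.
  by rewrite ltr_pM2l.
have dn0 : 0 < dn by lra.
set k := l - l'.
have ke : e * h < k by rewrite /k; lra.
have kb : k * a < l' * dn.
  have : l' * (b - a) <= l' * dn by rewrite ler_pM2l.
  rewrite /k; lra.
have [kh|kh] := leP (h * l) k.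
- have M1 : l' * dn ^+ 2 <= (k - h * l) * (dn * a) + dn * E.
    have : (k - h * l) * c <= (k - h * l) * (dn * a) by rewrite ler_wpM2l // subr_ge0.
    rewrite /k in M *; lra.
  have M2 : l' * dn <= (k - h * l) * a + E.
    have : dn * (l' * dn) <= dn * ((k - h * l) * a + E).
      move: M1; rewrite expr2; lra.
    by rewrite ler_pM2l.
  have : eta * h < l * a * h by rewrite ltr_pM2r.
  lra.
- have M1 : l' * dn ^+ 2 <= (h * l - k) * (dn ^+ 2 / 2) + dn * E.
    have : (k - h * l) * c <= (h * l - k) * (dn ^+ 2 / 2).
      have -> : (k - h * l) * c = (h * l - k) * (- c) by ring.
      rewrite ler_wpM2l ?subr_ge0 ?(ltW kh) //.
      have : a ^+ 2 <= b ^+ 2 by rewrite !expr2; nra.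
      lra.
    rewrite /k in M *; lra.
  have M2 : (l' - (h * l) / 2) * dn <= E.
    have : dn * ((l' - (h * l) / 2) * dn) <= dn * E.
      have : (h * l - k) * (dn ^+ 2 / 2) <= (h * l) * (dn ^+ 2 / 2).
        by rewrite ler_wpM2r ?divr_ge0 ?sqr_ge0 //; lra.
      move: M1; rewrite expr2; lra.
    by rewrite ler_pM2l.
  have l'2 : l / 2 <= l' - (h * l) / 2.
    have : h * l <= 1 / 3 * l by rewrite ler_pM2r.
    rewrite /k in kh; lra.
  have M3 : l / 2 * dn <= E.
    by apply: le_trans M2; rewrite ler_pM2r.
  have M4 : e * h * a < l' * dn.
    by apply: le_lt_trans kb; rewrite ler_pM2r // ltW.
  have M5 : l' * dn <= l * dn by rewrite ler_pM2r //; lra.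
  have : (l / 2) * (e * h * a) < (l / 2) * (l * dn).
    rewrite ltr_pM2l; [lra | lra].
  have : eta * h <= a * e / 2 * h by rewrite ler_pM2r.
  have : (l / 2) * (l * dn) = l * (l / 2 * dn) by ring.
  have : l * (l / 2 * dn) <= l * E by rewrite ler_pM2l.
  have : l * E <= l * (eta * h) by rewrite ler_pM2l.
  have : (l / 2) * (e * h * a) = l * (a * e / 2 * h) by ring.
  move=> q1 q2 q3 q4 q5 q6.
  have : l * (eta * h) <= l * (a * e / 2 * h) by rewrite ler_pM2l.
  lra.
Qed.

Lemma pow_lt (R : realType) (l l' m n : R) (k : nat) :
  0 < l' -> l' < l -> 0 < m -> 0 <= n -> l * m ^+ k = l' * n ^+ k -> m < n.
Proof.
move=> l'0 ll' m0 n0 eq; rewrite ltNge; apply/negP => nm.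
have h1 : n ^+ k <= m ^+ k by rewrite lerXn2r // nnegrE ltW.
have h2 : 0 < m ^+ k by rewrite exprn_gt0.
have : l' * n ^+ k <= l' * m ^+ k by rewrite ler_pM2l.
have : l' * m ^+ k < l * m ^+ k by rewrite ltr_pM2r.
lra.
Qed.

Theorem lemma2p5 (R : realType) (H : completeNormedModType R)
  (ip : H -> H -> R) (A : H -> set H) (theta : R) (p : nat) (t0 : R)
  (x x' : R -> H) (lam : R -> R) :
  is_inner_product ip ->
  maximal_monotone ip A ->
  (exists z, A z 0) ->
  0 < theta -> (1 <= p)%N -> 0 < t0 ->
  C1_on 0 t0 x x' ->
  locally_lipschitz_on 0 t0 lam ->
  (forall t, t \in `[0, t0] -> 0 < lam t) ->
  (forall t, t \in `[0, t0] ->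
     x' t + x t - resolvent A (lam t) (x t) = 0) ->
  (forall t, t \in `[0, t0] ->
     lam t * `|resolvent A (lam t) (x t) - x t| ^+ (p - 1) = theta) ->
  ~ A (x 0) 0 ->
  forall s t, s \in `[0, t0] -> t \in `[0, t0] -> s <= t -> lam s <= lam t.
Proof.
move=> hip [mono _] _ th0 p1 t00 [Dx _] Llip lam0 Heq Hc _.
have [p1'|p2] := eqVneq p 1%N.
  move=> s t sI tI _; have := Hc s sI; have := Hc t tI.
  by rewrite p1' subnn !expr0 !mulr1 => -> ->.
have kpos : (0 < p - 1)%N by rewrite subn_gt0 ltn_neqAle eq_sym p2 p1.
move: (p - 1)%N kpos Hc => k kpos Hc.
pose S r := [set y | exists u, A y u /\ x r = y + lam r *: u].
pose Ecl r := exists y, S r y.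
have JE r : Ecl r -> S r (resolvent A (lam r) (x r)).
  by move=> ex; apply: xgetPex.
have JF r : ~ Ecl r -> resolvent A (lam r) (x r) = 0.
  by move=> nex; apply: xgetPN => y Sy; apply: nex; exists y.
have x'E r : r \in `[0, t0] -> x' r = resolvent A (lam r) (x r) - x r.
  move=> rI; have := Heq r rI; rewrite -addrA => /eqP; rewrite addr_eq0 => /eqP ->.
  by rewrite opprB.
have inI r : (r \in `[0, t0]) = (0 <= r <= t0) by rewrite in_itv.
have PC : forall r, r \in `[0, t0] -> forall e, 0 < e -> exists2 d, 0 < d &
    forall h, 0 < h -> h < d -> r + h <= t0 -> (Ecl (r + h) <-> Ecl r) ->
    lam r - e * h <= lam (r + h).
  move=> r rI e e0.
  have lr0 := lam0 r rI.
  have rhI h : 0 < h -> r + h <= t0 -> r + h \in `[0, t0].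
    by move: rI; rewrite !inI => /andP[r0 _] h0 ->; rewrite andbT; lra.
  have [Er|Fr] := pselect (Ecl r).
  - move: (JE r Er) (x'E r rI) (Hc r rI); set Y := resolvent _ _ _ => -[u [Au hx]] x'r HcR.
    have hYX : Y - x r = - (lam r *: u) by rewrite hx opprD addrA subrr add0r.
    have nYX : `|Y - x r| = lam r * `|u| by rewrite hYX normrN normrZ gtr0_norm.
    rewrite nYX in HcR.
    have a0 : 0 < `|u|.
      rewrite lt_neqAle normr_ge0 andbT; apply/eqP => a0.
      by move: HcR; rewrite -a0 mulr0 expr0n /= gtn_eqF // mulr0 => th; move: th0; rewrite -th ltxx.
    pose eta := Num.min (lam r * `|u|) (`|u| * e / 2) / 2.
    have eta0 : 0 < eta.
      by rewrite /eta divr_gt0 // lt_min mulr_gt0 //= divr_gt0 // mulr_gt0.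
    have [d1 d10 Hd1] := deriv_ext Dx rI eta0.
    exists (Num.min d1 (1/3)); first by rewrite lt_min d10 /=; lra.
    move=> h h0 hd hle Eiff.
    have Es : Ecl (r + h) by apply/Eiff.
    have sI := rhI h h0 hle.
    move: (JE _ Es) (Hc _ sI); set Y' := resolvent _ _ _ => -[u' [Au' hx']] HcS.
    have hYX' : Y' - x (r + h) = - (lam (r + h) *: u') by rewrite hx' opprD addrA subrr add0r.
    have lh0 := lam0 _ sI.
    have nYX' : `|Y' - x (r + h)| = lam (r + h) * `|u'| by rewrite hYX' normrN normrZ gtr0_norm.
    rewrite nYX' in HcS.
    rewrite leNgt; apply/negP => contra.
    have hd1 : h < d1 by move: hd; rewrite lt_min => /andP[].
    have h3 : h <= 1/3 by move: hd; rewrite lt_min => /andP[_ /ltW].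
    have rlt : r < r + h by lra.
    have hd' : r + h - r < d1 by lra.
    have := Hd1 (r + h) sI rlt hd'.
    have -> : r + h - r = h by lra.
    rewrite x'r.
    set e' := x (r + h) - x r - h *: (Y - x r) => HE.
    set D := u' - u.
    have eh0 : 0 < e * h by apply: mulr_gt0.
    apply: (core (l := lam r) (l' := lam (r + h)) (a := `|u|) (b := `|u'|)
      (dn := `|D|) (c := ip D u) (ce := ip D e') (E := `|e'|) (h := h) (e := e) (eta := eta)) => //.
    + have m1 : Num.min (lam r * `|u|) (`|u| * e / 2) <= lam r * `|u| by rewrite ge_min lexx.
      have := mulr_gt0 lr0 a0; rewrite /eta; lra.
    + have m1 : Num.min (lam r * `|u|) (`|u| * e / 2) <= `|u| * e / 2 by rewrite ge_min lexx orbT.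
      have : 0 < `|u| * e / 2 by rewrite divr_gt0 // mulr_gt0.
      rewrite /eta; lra.
    + have llt : lam (r + h) < lam r.
        by apply: (lt_le_trans contra); rewrite lerBlDr lerDl ltW.
      have hcc : lam r * (lam r * `|u|) ^+ k = lam (r + h) * (lam (r + h) * `|u'|) ^+ k.
        by rewrite HcR HcS.
      have n0 : 0 <= lam (r + h) * `|u'| by rewrite mulr_ge0 // ltW.
      exact: (pow_lt lh0 llt (mulr_gt0 lr0 a0) n0 hcc).
    + have M := mono _ _ _ _ Au' Au.
      have hY : Y = x r - lam r *: u by rewrite hx addrK.
      have hY' : Y' = x (r + h) - lam (r + h) *: u' by rewrite hx' addrK.
      have e1 : ip D (Y' - Y) = ip D (x (r + h)) - lam (r + h) * ip D u'
          - (ip D (x r) - lam r * ip D u).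
        by rewrite (ip_Br hip) {1}hY' {1}hY !(ip_Br hip) !(ip_Zr hip).
      have e2 : ip D e' = ip D (x (r + h)) - ip D (x r) + h * lam r * ip D u.
        rewrite /e' hYX !(ip_Br hip) (ip_Zr hip) (ip_Nr hip) (ip_Zr hip); ring.
      have e3 : ip D u' = ip D D + ip D u.
        by rewrite -(ip_Dr hip) /D subrK.
      have e4 : ip D D = `|D| ^+ 2 by rewrite (ip_norm hip).
      rewrite -/D in M.
      rewrite e1 e3 e4 in M.
      rewrite e2.
      move: M; set c := ip D u; set X1 := ip D (x (r + h)); set X0 := ip D (x r).
      move=> M.
      have -> : (lam r - lam (r + h) - h * lam r) * c + (X1 - X0 + h * lam r * c) -
        lam (r + h) * `|D| ^+ 2 = X1 - lam (r + h) * (`|D| ^+ 2 + c) - (X0 - lam r * c) by ring.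
      exact: M.
    + exact: (ip_CS hip).
    + exact: (ip_CS' hip).
    + exact: (ip_CS hip).
    + exact: lerB_dist.
    + have hu' : u' = D + u by rewrite /D subrK.
      by rewrite {1}hu' (ip_polar hip).
  - move: (JF r Fr) (x'E r rI) (Hc r rI) => J0 x'r HcR.
    rewrite J0 sub0r in x'r; rewrite J0 sub0r normrN in HcR.
    have m0 : 0 < `|x r|.
      rewrite lt_neqAle normr_ge0 andbT; apply/eqP => m0.
      by move: HcR; rewrite -m0 expr0n /= gtn_eqF // mulr0 => th; move: th0; rewrite -th ltxx.
    pose eta := `|x r| / 2.
    have eta0 : 0 < eta by rewrite divr_gt0.
    have [d1 d10 Hd1] := deriv_ext Dx rI eta0.
    exists (Num.min d1 (1/2)); first by rewrite lt_min d10 /=; lra.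
    move=> h h0 hd hle Eiff.
    have Fs : ~ Ecl (r + h) by move/Eiff.
    have sI := rhI h h0 hle.
    have lh0 := lam0 _ sI.
    have HcS := Hc _ sI; rewrite JF // sub0r normrN in HcS.
    rewrite leNgt; apply/negP => contra.
    have hd1 : h < d1 by move: hd; rewrite lt_min => /andP[].
    have h2 : h < 1/2 by move: hd; rewrite lt_min => /andP[_].
    have rlt : r < r + h by lra.
    have hd' : r + h - r < d1 by lra.
    have := Hd1 (r + h) sI rlt hd'.
    have -> : r + h - r = h by lra.
    rewrite x'r => HE.
    have eh0 : 0 < e * h by apply: mulr_gt0.
    have llt : lam (r + h) < lam r.
      by apply: (lt_le_trans contra); rewrite lerBlDr lerDl ltW.
    have hcc : lam r * `|x r| ^+ k = lam (r + h) * `|x (r + h)| ^+ k by rewrite HcR HcS.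
    have lt := pow_lt lh0 llt m0 (normr_ge0 _) hcc.
    have dec : x (r + h) = (x (r + h) - x r - h *: - x r) + (1 - h) *: x r.
      by rewrite scalerN opprK -addrA -scalerDl (addrC h) subrK scale1r subrK.
    have : `|x (r + h)| <= eta * h + (1 - h) * `|x r|.
      rewrite {1}dec; apply: (le_trans (ler_normD _ _)); rewrite normrZ ger0_norm.
        by rewrite lerD.
      lra.
    have q : eta * h < `|x r| * h by rewrite ltr_pM2r // /eta; lra.
    rewrite mulrBl mul1r.
    lra.
have Lip : forall c d, 0 <= c -> d <= t0 -> forall c', c <= c' <= d ->
    exists2 dd, 0 < dd & exists L, forall q, c <= q <= d ->
      `|q - c'| < dd -> `|lam q - lam c'| <= L * `|q - c'|.
  move=> c d c0 dt c' /andP[cc' c'd].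
  have c'I : c' \in `[0, t0] by rewrite inI; apply/andP; split; lra.
  have [dd dd0 [L HL]] := Llip c' c'I.
  exists dd => //; exists L => q /andP[cq qd] qc.
  apply: HL => //.
    by rewrite inI; apply/andP; split; lra.
  by rewrite subrr normr0.
have iff_aux (P Q C : Prop) : ~ (P <-> C) -> ~ (Q <-> C) -> (P <-> Q).
  by move=> h1 h2; case: (pselect P); case: (pselect Q); case: (pselect C); tauto.
have Interval : forall c d, 0 <= c -> c <= d -> d <= t0 ->
    (forall q, c <= q <= d -> (Ecl q <-> Ecl c)) -> lam c <= lam d.
  move=> c d c0 cd dt Hq.
  apply: dini => //; first exact: Lip.
  move=> r /andP[cr rd] e e0 d' d'0.
  have rI : r \in `[0, t0] by rewrite inI; apply/andP; split; lra.
  have [dl dl0 Hdl] := PC r rI e e0.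
  pose h := Num.min dl (Num.min d' (d - r)) / 2.
  have m1 : Num.min dl (Num.min d' (d - r)) <= dl by rewrite ge_min lexx.
  have m2 : Num.min dl (Num.min d' (d - r)) <= d' by rewrite !ge_min lexx !orbT.
  have m3 : Num.min dl (Num.min d' (d - r)) <= d - r by rewrite !ge_min lexx !orbT.
  have mp : 0 < Num.min dl (Num.min d' (d - r)) by rewrite !lt_min dl0 d'0 subr_gt0 rd.
  have h0 : 0 < h by rewrite /h; lra.
  exists h; split => //; first (rewrite /h; lra); first (rewrite /h; lra).
  apply: Hdl => //; first (rewrite /h; lra); first (rewrite /h; lra).
  have := Hq (r + h); have := Hq r.
  have -> : (c <= r <= d) = true by apply/andP; split; lra.
  have -> : (c <= r + h <= d) = true by apply/andP; split; rewrite /h; lra.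
  move=> H1 H2; have := H1 isT; have := H2 isT; tauto.
move=> s t sI tI st.
move: sI tI; rewrite !inI => /andP[s0 st0] /andP[t0' tt0].
apply: dini => //; first exact: Lip.
move=> r /andP[sr rt] e e0 d' d'0.
have rI : r \in `[0, t0] by rewrite inI; apply/andP; split; lra.
have [dl dl0 Hdl] := PC r rI e e0.
set m0 := Num.min dl (Num.min d' (t - r)).
have m1 : m0 <= dl by rewrite ge_min lexx.
have m2 : m0 <= d' by rewrite !ge_min lexx !orbT.
have m3 : m0 <= t - r by rewrite !ge_min lexx !orbT.
have mp : 0 < m0 by rewrite !lt_min dl0 d'0 subr_gt0 rt.
have [[h [h0 [hm Eiff]]] | nex] := pselect (exists h, 0 < h /\ h < m0 /\ (Ecl (r + h) <-> Ecl r)).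
  exists h; split => //; try lra.
  by apply: Hdl => //; lra.
pose h := m0 / 2.
have h0 : 0 < h by rewrite /h; lra.
have hm : h < m0 by rewrite /h; lra.
exists h; split => //; try lra.
have eh0 : 0 < e * h by apply: mulr_gt0.
suff : lam r <= lam (r + h) by lra.
have notC q : 0 < q -> q < m0 -> ~ (Ecl (r + q) <-> Ecl r).
  by move=> q0 qm E; apply: nex; exists q.
have mono_eta : forall et, 0 < et -> et <= h -> lam (r + et) <= lam (r + h).
  move=> et et0 eth.
  apply: Interval; try lra.
  move=> q /andP[q1 q2].
  have -> : q = r + (q - r) by lra.
  apply: iff_aux; apply: notC; lra.
have [dd dd0 [L HL]] := Llip r rI.
apply/ler_addgt0Pr => g g0.
pose et := Num.min h (Num.min (dd / 2) (g / (`|L| + 1))).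
have k1 : et <= h by rewrite ge_min lexx.
have k2 : et <= dd / 2 by rewrite !ge_min lexx !orbT.
have k3 : et <= g / (`|L| + 1) by rewrite !ge_min lexx !orbT.
have et0 : 0 < et by rewrite !lt_min h0 !divr_gt0 //; have := normr_ge0 L; lra.
have etI : r + et \in `[0, t0] by rewrite inI; apply/andP; split; rewrite /h in k1; lra.
have := HL (r + et) r etI rI.
have -> : r + et - r = et by lra.
rewrite subrr normr0 gtr0_norm // => /(_ ltac:(lra) dd0) HLe.
have : L * et <= `|L| * et by rewrite ler_wpM2r ?(ltW et0) // ler_norm.
have : `|L| * et < g.
  have : et * (`|L| + 1) <= g by rewrite -ler_pdivlMr //; have := normr_ge0 L; lra.
  have := normr_ge0 L; nra.
have := ler_norm (lam r - lam (r + et)); rewrite distrC.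
have := mono_eta et et0 k1.
lra.
Qed.
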